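(* For every positive integer $n$, \[ \sum_{j=1}^{n}\left(\binom{n}{j}+1\right)\frac{B_j}{j}\left(1-2^{j}\right)=1 . \]
   Context: $B_j$ is the $j$th Bernoulli number ($\frac{t}{e^t-1}=\sum_{m\ge0}B_m\frac{t^m}{m!}$, so $B_1=-1/2$). *)

(* Defs.v *)
From mathcomp Require Import all_boot all_order all_algebra.
Set Implicit Arguments. Unset Strict Implicit. Unset Printing Implicit Defensive.
Import Order.TTheory GRing.Theory Num.Theory.
Local Open Scope ring_scope.

(* Bernoulli numbers (rationals), convention t/(e^t-1) = sum B_m t^m/m!,
   so B_1 = -1/2.  Characterized by B_0 = 1 and, for m >= 1,
   sum_{k=0}^{m} C(m+1,k) B_k = 0, i.e.
   B_m = - (1/(m+1)) * sum_{k<m} C(m+1,k) B_k. *)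

Fixpoint bern_list (m : nat) : seq rat :=
  match m with
  | 0%N => [:: 1]
  | m'.+1 =>
      let s := bern_list m' in
      rcons s (- (m'.+2%:R)^-1 *
               \sum_(k < m'.+1) ('C(m'.+2, k))%:R * nth 0 s k)
  end.

Definition bernoulli (m : nat) : rat := nth 0 (bern_list m) m.

(* Main.v *)
Require Import Defs.
From mathcomp Require Import all_boot all_order all_algebra.
From mathcomp Require Import ring lra.
Import Order.TTheory GRing.Theory Num.Theory.
Local Open Scope ring_scope.

Definition low N (p : {poly rat}) := forall i, (i < N)%N -> p`_i = 0.

Lemma lowD N p q : low N p -> low N q -> low N (p + q).
Proof. by move=> hp hq i hi; rewrite coefD hp // hq // addr0. Qed.
Lemma lowB N p q : low N p -> low N q -> low N (p - q).
Proof. by move=> hp hq i hi; rewrite coefB hp // hq // subr0. Qed.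
Lemma lowMl N r p : low N p -> low N (r * p).
Proof.
move=> hp i hi; rewrite coefM big1 // => j _; rewrite hp ?mulr0 //.
exact: leq_ltn_trans (leq_subr _ _) hi.
Qed.

Lemma coefMpoly N (a b : nat -> rat) m : (m < N)%N ->
  ((\poly_(i < N) a i) * (\poly_(i < N) b i))`_m = \sum_(k < m.+1) a k * b (m - k)%N.
Proof.
move=> hm; rewrite coefM; apply: eq_bigr => k _; rewrite !coef_poly.
have hk : (k < N)%N by apply: leq_ltn_trans hm; rewrite -ltnS.
by rewrite hk (leq_ltn_trans (leq_subr _ _) hm).
Qed.

Lemma fact_neq0 k : (k`!%:R : rat) != 0.
Proof. by rewrite pnatr_eq0 -lt0n fact_gt0. Qed.

Lemma term (c x : rat) k m : (k <= m)%N ->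
  c ^+ k * x / k`!%:R * (c ^+ (m - k)%N / (m - k)%N`!%:R)
  = c ^+ m / m`!%:R * ('C(m, k)%:R * x).
Proof.
move=> hk; have hf := bin_fact hk.
have hk1 := fact_neq0 k; have hk2 := fact_neq0 (m - k)%N.
have -> : c ^+ m = c ^+ k * c ^+ (m - k)%N by rewrite -exprD subnKC.
rewrite -hf !natrM.
have hc : ('C(m, k)%:R : rat) != 0 by rewrite pnatr_eq0 -lt0n bin_gt0.
by field; rewrite hk1 hk2 hc.
Qed.

Lemma size_bern m : size (bern_list m) = m.+1.
Proof. by elim: m => //= m IH; rewrite size_rcons IH. Qed.

Lemma nth_bern m k : (k <= m)%N -> nth 0 (bern_list m) k = bernoulli k.
Proof.
elim: m => [|m IH] hk.
  by move: hk; rewrite leqn0 => /eqP ->.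
rewrite /= nth_rcons size_bern.
case: (ltnP k m.+1) => hkm; first by rewrite IH.
have -> : k = m.+1 by apply/eqP; rewrite eqn_leq hk hkm.
by rewrite eqxx /bernoulli /= nth_rcons size_bern ltnn eqxx.
Qed.

Lemma bernS m : bernoulli m.+1 =
  - (m.+2%:R)^-1 * \sum_(k < m.+1) ('C(m.+2, k))%:R * bernoulli k.
Proof.
rewrite {1}/bernoulli /= nth_rcons size_bern ltnn eqxx.
congr (_ * _); apply: eq_bigr => k _; rewrite nth_bern //.
by rewrite -ltnS.
Qed.

Lemma BR m : \sum_(k < m) ('C(m, k))%:R * bernoulli k = (m == 1)%:R.
Proof.
case: m => [|m]; first by rewrite big_ord0.
case: m => [|m]; first by rewrite big_ord1 /bernoulli /= bin0 mul1r.
rewrite big_ord_recr /= bernS binSn.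
have h : (m.+2%:R : rat) != 0 by rewrite pnatr_eq0.
set S := \sum_(_ < _) _.

by rewrite mulrA mulrN mulfV // mulN1r addrN.
Qed.

Definition Bc N (c : rat) : {poly rat} := \poly_(i < N) (c ^+ i * bernoulli i / i`!%:R).
Definition Ec N (c : rat) : {poly rat} := \poly_(i < N) (c ^+ i * 1 / i`!%:R).

Lemma sum_term (c : rat) (x : nat -> rat) m :
  \sum_(k < m.+1) c ^+ k * x k / k`!%:R * (c ^+ (m - k)%N * 1 / (m - k)%N`!%:R)
  = c ^+ m / m`!%:R * \sum_(k < m.+1) 'C(m, k)%:R * x k.
Proof.
rewrite mulr_sumr; apply: eq_bigr => k _; rewrite mulr1 term //.
by rewrite -ltnS.
Qed.

Lemma F1 N c : low N (Bc N c * Ec N c - Bc N c - c%:P * 'X).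
Proof.
move=> m hm; rewrite !coefB coefMpoly // coefCM coefX coef_poly hm sum_term.
rewrite big_ord_recr /= BR binn mul1r.
have hf := fact_neq0 m.
case: eqP => [->|_] /=; last by field.
have -> : (1`!)%:R = 1 :> rat by [].
by rewrite !divr1 expr1; ring.
Qed.

Lemma F2 N : low N (Ec N 1 * Ec N 1 - Ec N 2).
Proof.
move=> m hm; rewrite !coefB coefMpoly // coef_poly hm.
rewrite (sum_term 1 (fun _ => 1)) expr1n.
have -> : \sum_(k < m.+1) ('C(m, k))%:R * (1 : rat) = 2 ^+ m.
  have -> : (2 : rat) = 1 + 1 by ring.
  by rewrite exprDn; apply: eq_bigr => k _; rewrite !expr1n mulr1.
by rewrite !mulr1 mul1r mulrC subrr.
Qed.

Lemma cancelU N (Q : {poly rat}) : low N (Q * (Ec N 1 - 1)) ->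
  forall i, (i.+1 < N)%N -> Q`_i = 0.
Proof.
move=> h; elim/ltn_ind => i IH hi.
have := h i.+1 hi; rewrite coefM big_ord_recr /= big_ord_recr /= big1; last first.
  move=> j _; rewrite IH ?mul0r //; exact: leq_ltn_trans (ltn_ord j) (ltnW hi).
have -> : (i.+1 - i)%N = 1%N by rewrite subSnn.
rewrite !coefB !coef_poly !coef1 /= subnn /=.
have h1 : (1 < N)%N by apply: leq_ltn_trans hi.
have h0 : (0 < N)%N by apply: ltn_trans h1.
rewrite h1 h0 /= (_ : factorial 1 = 1%N) // (_ : factorial 0 = 1%N) //.
move=> e; rewrite -[RHS]e !divr1 !expr1n; ring.
Qed.

Definition h k : rat := (2 ^+ k - 1) * bernoulli k.

Lemma HB N : Bc N 2 - Bc N 1 = \poly_(i < N) (1 ^+ i * h i / i`!%:R).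
Proof.
apply/polyP => i; rewrite coefB !coef_poly; case: ifP => _; last by rewrite subrr.
rewrite /h !expr1n; ring.
Qed.

Lemma HR m : \sum_(k < m.+1) 'C(m, k)%:R * h k + h m = - (m == 1)%:R.
Proof.
pose N := m.+2.
pose Q := (Bc N 2 - Bc N 1) * (Ec N 1 + 1) + 'X.
have L : low N (Q * (Ec N 1 - 1)).
  have -> : Q * (Ec N 1 - 1) = Bc N 2 * (Ec N 1 * Ec N 1 - Ec N 2)
      + (Bc N 2 * Ec N 2 - Bc N 2 - (2 : rat)%:P * 'X)
      - (Ec N 1 + 1) * (Bc N 1 * Ec N 1 - Bc N 1 - (1 : rat)%:P * 'X).
    rewrite polyC1 polyC_natr /Q; ring.
  apply: lowB; [apply: lowD; [apply: lowMl; exact: F2|exact: F1] | apply: lowMl; exact: F1].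
have := @cancelU _ _ L m (ltnSn m.+1).
rewrite /Q coefD coefX mulrDr mulr1 coefD HB coefMpoly // coef_poly ltnS leqnSn.
rewrite (sum_term 1 h) !expr1n !mul1r.
have hf := fact_neq0 m.
move=> e.
have -> : \sum_(k < m.+1) 'C(m, k)%:R * h k + h m
   = m`!%:R * (m`!%:R^-1 * \sum_(k < m.+1) 'C(m, k)%:R * h k + h m / m`!%:R)
  by field.
rewrite (_ : _ + _ = - (m == 1)%:R); last first.
  by rewrite -(addrK ((m == 1)%:R) (_ + _)) e sub0r.
case: eqP => [->|_]; last by rewrite oppr0 mulr0.
by rewrite mulrN mulr1.
Qed.

Definition e m : rat := -2 * h m.+1 / m.+1%:R.

Lemma ER m : \sum_(k < m.+1) 'C(m, k)%:R * e k + e m = 2 * (m == 0)%:R.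
Proof.
have := HR m.+1; rewrite big_ord_recl /= {1}/h expr0 subrr mul0r mulr0 add0r.
have hm1 : (m.+1%:R : rat) != 0 by rewrite pnatr_eq0.
have -> : \sum_(k < m.+1) 'C(m, k)%:R * e k
   = -2 / m.+1%:R * \sum_(i < m.+1) 'C(m.+1, (lift ord0 i))%:R * h (lift ord0 i).
  rewrite mulr_sumr; apply: eq_bigr => k _ /=; rewrite /e /bump /=.
  have hk1 : (k.+1%:R : rat) != 0 by rewrite pnatr_eq0.
  have hb : (k.+1%:R * 'C(m.+1, k.+1)%:R : rat) = m.+1%:R * 'C(m, k)%:R.
    by rewrite -!natrM -mul_bin_diag.
  have e1 : ('C(m.+1, k.+1)%:R : rat) = m.+1%:R * 'C(m, k)%:R / k.+1%:R.
    by apply: (mulfI hk1); rewrite hb [RHS]mulrC divfK.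
  rewrite e1 add1n; field; by rewrite !(addrC 1) !natr1 hk1 hm1.
move=> E.
have -> : e m = -2 / m.+1%:R * h m.+1 by rewrite /e mulrAC.
rewrite -mulrDr.
rewrite (_ : _ + _ = - (m.+1 == 1)%:R); last first.
  by rewrite -E.
case: m hm1 E => [|m] hm1 _ /=; last by rewrite oppr0 !mulr0.
by rewrite divr1; ring.
Qed.

Definition Ssum n := \sum_(m < n) ('C(n, m.+1)%:R + 1) * e m.

Lemma SS n : Ssum n.+1 = 2.
Proof.
elim: n => [|n IH].
  rewrite /Ssum big_ord1 /e /h bernS big_ord1 /bernoulli /=.
  have -> : ('C(1, 1)%:R + 1 : rat) = 2 by rewrite binn; ring.
  have -> : ('C(2, 0)%:R : rat) = 1 by rewrite bin0.
  by rewrite divr1; field.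
rewrite /Ssum.
have -> : \sum_(m < n.+2) ('C(n.+2, m.+1)%:R + 1) * e m
   = \sum_(m < n.+2) ('C(n.+1, m.+1)%:R + 1) * e m
     + \sum_(m < n.+2) 'C(n.+1, m)%:R * e m.
  rewrite -big_split; apply: eq_bigr => m _ /=; rewrite binS natrD; ring.
rewrite big_ord_recr /= bin_small // add0r mul1r -addrA (addrC (e n.+1)) ER /= mulr0 addr0.
exact: IH.
Qed.

Theorem corollary2 (n : nat) : (0 < n)%N ->
  \sum_(1 <= j < n.+1) (('C(n, j))%:R + 1) * (bernoulli j / j%:R)
                        * (1 - 2 ^+ j) = 1 :> rat.
Proof.
case: n => // n _.
rewrite big_add1 /= big_mkord.
have -> : \sum_(i < n.+1) ('C(n.+1, i.+1)%:R + 1) * (bernoulli i.+1 / i.+1%:R)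
            * (1 - 2 ^+ i.+1)
        = \sum_(i < n.+1) ('C(n.+1, i.+1)%:R + 1) * e i / 2.
  apply: eq_bigr => i _; rewrite /e /h.
  have hi : (i.+1%:R : rat) != 0 by rewrite pnatr_eq0.
  by field; rewrite ?(addrC 1) ?natr1.
by rewrite -mulr_suml -/(Ssum n.+1) SS divff.
Qed.
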